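(* Consider the thresholding bandit setting and algorithm LSA with parameter $\alpha$ in the context, with $0<\alpha\le 8$ and $T\ge\max\{40/\alpha+1,40\}K$. Let $f(x)=\alpha x+\ln\alpha+0.5-\alpha$. For every arm $i\in B$ and every $\varkappa\ge\frac{\alpha-\ln\alpha-0.5}{\alpha}$, on the event $\mathcal{M}_{i,\varkappa}\cap\mathcal{F}_{\Lambda-f(\varkappa)}$ we have $T_i(T)\ge\lambda_i/20$.
   Context: $K\ge2$ arms; arm $i$ has reward distribution $\mathcal{D}_i$ on $[0,1]$ with mean $\theta_i$; $\theta\in(0,1)$; $\Delta_i=|\theta_i-\theta|$ (convention $\ln(1/0)=+\infty$). For each $i$, rewards $X_{i,1},X_{i,2},\dots$ from successive pulls of arm $i$ are i.i.d. from $\mathcal{D}_i$, independent across arms; $\hat\Delta_{i,t}=|\frac1t\sum_{s\le t}X_{i,s}-\theta|$. $T_i(t)$ = number of pulls of arm $i$ in the first $t$ rounds; $\hat\Delta_i(t)=\hat\Delta_{i,T_i(t)}$. LSA (parameter $\alpha>0$, budget $T$): pull each arm once in rounds $1..K$; in round $t=K+1,\dots,T$ pull an arm minimizing $\alpha T_i(t-1)(\hat\Delta_i(t-1))^2+0.5\ln T_i(t-1)$. $\xi_i(t)=\alpha T_i(t)(\hat\Delta_i(t))^2+0.5\ln T_i(t)$ for $t\ge K$; $\mathcal{F}_C=\{\exists T',K\le T'\le T:\xi_i(T')>C\ \forall i\}$. $M=\max\{40/\alpha+1,40\}$; $g_i(x)=e^{2x}$ if $x\le\ln\Delta_i^{-1}$,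 $g_i(x)=\frac{x-\ln\Delta_i^{-1}+\alpha}{\alpha\Delta_i^2}$ otherwise; $\Lambda$ is the unique $x\ge0$ with $\sum_ig_i(x)=T/M$; $\lambda_i=g_i(\Lambda)$; $B=\{i:\ln\Delta_i^{-1}<\Lambda\}$. $\mathcal{M}_{i,\varkappa}$ is the event that for all integers $1\le t\le\lambda_i$, $|\hat\Delta_{i,t}-\Delta_i|\le\sqrt{(\lambda_i\Delta_i^2/5-\varkappa/2+\frac1{4\alpha}\ln\frac{\lambda_i}{t})/t}$. *)

(* Defs.v *)
From HB Require Import structures.
From mathcomp Require Import all_boot all_order all_algebra.
From mathcomp Require Import reals sequences exp.
Set Implicit Arguments. Unset Strict Implicit. Unset Printing Implicit Defensive.
Import Order.TTheory GRing.Theory Num.Theory.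
Local Open Scope ring_scope.

Section TB.
Variables (R : realType) (K : nat).

(* T_i(t): number of pulls of arm i in rounds 1..t, given the arm a s pulled in round s *)
Definition Tcnt (a : nat -> 'I_K) (i : 'I_K) (t : nat) : nat :=
  (\sum_(1 <= s < t.+1) (a s == i))%N.

(* hat Delta_{i,n} = | (1/n) sum_{s<=n} X_{i,s} - theta |, rewards of arm i
   indexed from 0: X i 0, X i 1, ... are the rewards of its 1st, 2nd, ... pull *)
Definition emp_gap (X : nat -> R) (theta : R) (n : nat) : R :=
  `| (\sum_(s < n) X s) / n%:R - theta |.

Definition xi (alpha theta : R) (X : 'I_K -> nat -> R) (a : nat -> 'I_K)
  (i : 'I_K) (t : nat) : R :=
  let n := Tcnt a i t in
  alpha * n%:R * (emp_gap (X i) theta n) ^+ 2 + 2^-1 * ln (n%:R).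

(* a is a run of LSA (any tie-breaking) with budget T on reward stacks X *)
Definition is_LSA (alpha theta : R) (T : nat) (X : 'I_K -> nat -> R)
  (a : nat -> 'I_K) : Prop :=
  (forall i, Tcnt a i K = 1%N) /\
  (forall t : nat, (K < t <= T)%N ->
     forall j : 'I_K, xi alpha theta X a (a t) t.-1 <= xi alpha theta X a j t.-1).

Definition gap (thetas : 'I_K -> R) (theta : R) (i : 'I_K) : R := `| thetas i - theta |.

(* g_i(x), with the convention ln(1/0) = +oo *)
Definition gfun (alpha D x : R) : R :=
  if (D == 0) || (x <= ln (D^-1)) then expR (2 * x)
  else (x - ln (D^-1) + alpha) / (alpha * D ^+ 2).

Definition Mconst (alpha : R) : R := Num.max (40 / alpha + 1) 40.

Definition fkappa (alpha x : R) : R := alpha * x + ln alpha + 2^-1 - alpha.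

(* event M_{i,kappa}; the square root must be real (radicand >= 0) *)
Definition eventM (alpha theta : R) (X : 'I_K -> nat -> R) (i : 'I_K)
  (D lam kappa : R) : Prop :=
  forall t : nat, (1 <= t)%N -> t%:R <= lam ->
    let r := (lam * D ^+ 2 / 5 - kappa / 2 + (4 * alpha)^-1 * ln (lam / t%:R)) / t%:R in
    0 <= r /\ `| emp_gap (X i) theta t - D | <= Num.sqrt r.

Definition eventF (alpha theta : R) (T : nat) (X : 'I_K -> nat -> R)
  (a : nat -> 'I_K) (C : R) : Prop :=
  exists T' : nat, (K <= T' <= T)%N /\ forall j : 'I_K, C < xi alpha theta X a j T'.

End TB.

(* Main.v *)
Require Import Defs.
From HB Require Import structures.
From mathcomp Require Import all_boot all_order all_algebra.
From mathcomp Require Import reals sequences exp.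
From mathcomp Require Import ring lra.
Import Order.TTheory GRing.Theory Num.Theory.
Local Open Scope ring_scope.
Lemma num_bound (R : realType) : 6 * ln (5/2 : R) - ln 20 <= 59/20.
Proof.
have h52 : (0:R) < 5/2 by lra.
have h20 : (0:R) < 20 by lra.
have -> : 6 * ln (5/2 : R) - ln 20 = ln ((5/2)^+6 / 20).
  rewrite [RHS]ln_div ?posrE ?exprn_gt0 // lnXn //; lra.
rewrite -[X in _ <= X](expRK (59/20 : R)) ler_ln ?posrE ?expR_gt0 ?divr_gt0 ?exprn_gt0 //.
have -> : (59/20 : R) = 10%:R * (59/200) by lra.
rewrite expRM_natl.
set x := expR (59/200 : R).
have hx : 259/200 <= x by rewrite /x; have := expR_ge1Dx (59/200 : R); lra.
have hx2 : 1677/1000 <= x^+2.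
  rewrite expr2; have := ler_pM (_ : 0 <= 259/200) (_ : 0 <= 259/200) hx hx; lra.
have hx4 : 2812/1000 <= x^+4.
  have -> : x^+4 = x^+2 * x^+2 by rewrite -exprD.
  have := ler_pM (_ : 0 <= 1677/1000) (_ : 0 <= 1677/1000) hx2 hx2; lra.
have hx8 : 7907/1000 <= x^+8.
  have -> : x^+8 = x^+4 * x^+4 by rewrite -exprD.
  have := ler_pM (_ : 0 <= 2812/1000) (_ : 0 <= 2812/1000) hx4 hx4; lra.
have -> : x^+10 = x^+8 * x^+2 by rewrite -exprD.
have := ler_pM (_ : 0 <= 7907/1000) (_ : 0 <= 1677/1000) hx8 hx2.
have -> : ((5/2 : R)^+6 / 20) = 15625/1280.
  rewrite !exprS expr0; lra.
lra.
Qed.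

Lemma ln_le_sub1 (R : realType) (x : R) : 0 < x -> ln x <= x - 1.
Proof. move=> hx; have := expR_ge1Dx (ln x); rewrite lnK ?posrE //; lra. Qed.

Lemma key (R : realType) (alpha D lam Lambda kappa t s e r rs : R) :
  0 < alpha -> 0 < D -> lam = (Lambda - ln D^-1 + alpha) / (alpha * D^+2) ->
  ln D^-1 < Lambda ->
  1 <= t -> 20 * t < lam -> 20 <= s -> s <= lam -> lam < s + 1 ->
  r = (lam * D ^+ 2 / 5 - kappa / 2 + (4 * alpha)^-1 * ln (lam / t)) / t ->
  0 <= r -> `|e - D| <= Num.sqrt r -> 0 <= e ->
  0 <= (lam * D ^+ 2 / 5 - kappa / 2 + (4 * alpha)^-1 * ln (lam / s)) / s ->
  alpha * t * e ^+ 2 + 2^-1 * ln t <= Lambda - (alpha * kappa + ln alpha + 2^-1 - alpha).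
Proof.
move=> ha hD hlam hL ht htl hs hsl hls hr r0 he e0 hrs.
have t0 : 0 < t by lra.
have s0 : 0 < s by lra.
have l0 : 0 < lam by lra.
have D2 : 0 < D ^+ 2 by rewrite exprn_gt0.
set y := Num.sqrt r.
have y0 : 0 <= y by rewrite sqrtr_ge0.
have yy : y ^+ 2 = r by rewrite sqr_sqrtr.
have hey : e <= D + y.
  by move: he; rewrite ler_distlC -/y => /andP[]; lra.
have he2 : e ^+ 2 <= 4 * D ^+ 2 + 4/3 * r.
  rewrite -yy; have : 0 <= (3 * D - y) ^+ 2 by rewrite sqr_ge0.
  have : e * e <= (D + y) * (D + y) by apply: ler_pM.
  rewrite !expr2; lra.
set A := alpha * lam * D ^+ 2.
have hA : A = Lambda - ln D^-1 + alpha.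
  rewrite /A hlam; field; rewrite ?mulf_neq0 ?gt_eqF //.
have a0 : alpha != 0 by rewrite gt_eqF.
have tn0 : t != 0 by rewrite gt_eqF.
have sn0 : s != 0 by rewrite gt_eqF.
have Dn0 : D != 0 by rewrite gt_eqF.
set w := alpha * kappa.
have htr : alpha * t * r = A / 5 - w / 2 + ln (lam / t) / 4.
  rewrite hr /A /w; field; rewrite ?a0 ?tn0 //.
have h1 : alpha * t * e ^+ 2 <= 4 * (alpha * t * D ^+ 2) + 4/3 * (alpha * t * r).
  have : alpha * t * e ^+ 2 <= alpha * t * (4 * D ^+ 2 + 4/3 * r).
    by rewrite ler_pM2l ?mulr_gt0.
  move=> H; apply: (le_trans H); rewrite le_eqVlt; apply/orP; left; apply/eqP; ring.
have hD1 : 20 * (alpha * t * D ^+ 2) <= A.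
  have -> : 20 * (alpha * t * D ^+ 2) = alpha * D ^+ 2 * (20 * t) by ring.
  have -> : A = alpha * D ^+ 2 * lam by rewrite /A; ring.
  by rewrite ler_pM2l ?mulr_gt0 //; lra.
have lnlt : ln (lam / t) = ln lam - ln t by rewrite ln_div ?posrE.
have l20 : ln 20 + ln t <= ln lam.
  rewrite -lnM ?posrE; try lra.
  by rewrite ler_ln ?posrE ?mulr_gt0 //; lra.
have hX : 0 <= lam * D ^+ 2 / 5 - kappa / 2 + (4 * alpha)^-1 * ln (lam / s).
  have -> : lam * D ^+ 2 / 5 - kappa / 2 + (4 * alpha)^-1 * ln (lam / s) =
    ((lam * D ^+ 2 / 5 - kappa / 2 + (4 * alpha)^-1 * ln (lam / s)) / s) * s.
    by rewrite divfK.
  by rewrite mulr_ge0 //; lra.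
have hX2 : 0 <= A / 5 - w / 2 + ln (lam / s) / 4.
  have -> : A / 5 - w / 2 + ln (lam / s) / 4 =
    alpha * (lam * D ^+ 2 / 5 - kappa / 2 + (4 * alpha)^-1 * ln (lam / s)).
    by rewrite /A /w; field.
  by rewrite mulr_ge0 //; lra.
have hls2 : lam / s <= 21/20.
  by rewrite ler_pdivrMr //; lra.
have hlns : ln (lam / s) <= 1/20.
  have := @ln_le_sub1 R (lam / s) (divr_gt0 l0 s0); lra.
have lnA : ln A = ln alpha + ln lam + 2 * ln D.
  rewrite /A lnM ?posrE ?mulr_gt0 // lnM ?posrE // lnXn //; lra.
have lnDi : ln D^-1 = - ln D by rewrite lnV ?posrE.
have Aa : alpha <= A by lra.
have lnaA : ln alpha <= ln A by rewrite ler_ln ?posrE //; lra.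
have lnA2 : ln A <= 2/5 * A - 1 + ln (5/2).
  have A0 : 0 < A by lra.
  have h25 : (0:R) < 2/5 by lra.
  have := @ln_le_sub1 R (2/5 * A) (mulr_gt0 h25 A0).
  rewrite lnM ?posrE //.
  have -> : (2/5 : R) = (5/2)^-1 by field.
  rewrite lnV ?posrE; lra.
have := num_bound R.
lra.
Qed.

Lemma Tcnt_S (K : nat) (a : nat -> 'I_K) i t :
  Tcnt a i t.+1 = (Tcnt a i t + (a t.+1 == i))%N.
Proof. by rewrite /Tcnt big_nat_recr. Qed.

Lemma Tcnt_mono (K : nat) (a : nat -> 'I_K) i m n :
  (m <= n)%N -> (Tcnt a i m <= Tcnt a i n)%N.
Proof.
elim: n => [|n IH]; first by rewrite leqn0 => /eqP ->.
rewrite leq_eqVlt => /orP [/eqP -> // | hm].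
apply: (leq_trans (IH hm)); rewrite Tcnt_S; exact: leq_addr.
Qed.

Theorem lemma10 (R : realType) (K T : nat) (alpha theta : R)
  (thetas : 'I_K -> R) (X : 'I_K -> nat -> R) (a : nat -> 'I_K)
  (Lambda kappa : R) (i : 'I_K) :
  (2 <= K)%N ->
  0 < theta < 1 ->
  (forall j, 0 <= thetas j <= 1) ->
  (forall j s, 0 <= X j s <= 1) ->
  0 < alpha <= 8 ->
  Mconst alpha * K%:R <= T%:R ->
  is_LSA alpha theta T X a ->
  0 <= Lambda ->
  \sum_(j < K) gfun alpha (gap thetas theta j) Lambda = T%:R / Mconst alpha ->
  (* i \in B *)
  0 < gap thetas theta i -> ln ((gap thetas theta i)^-1) < Lambda ->
  (alpha - ln alpha - 2^-1) / alpha <= kappa ->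
  eventM alpha theta X i (gap thetas theta i)
    (gfun alpha (gap thetas theta i) Lambda) kappa ->
  eventF alpha theta T X a (Lambda - fkappa alpha kappa) ->
  gfun alpha (gap thetas theta i) Lambda / 20 <= (Tcnt a i T)%:R.
Proof.
move=> hK hth hths hX /andP[ha _] hT [hLSA1 _] hL0 hsum hD hlnD hk hM hF.
set D := gap thetas theta i in hD hlnD hM *.
set lam := gfun alpha D Lambda in hM *.
have hlam : lam = (Lambda - ln D^-1 + alpha) / (alpha * D ^+ 2).
  by rewrite /lam /gfun (gt_eqF hD) /= leNgt hlnD.
case: (leP (lam / 20) (Tcnt a i T)%:R) => // hlt.
exfalso.
case: hF => T' [/andP [hKT' hT'T] hxi].
have := hxi i; rewrite /xi.
set t := Tcnt a i T'.
have t1 : (1 <= t)%N by rewrite -(hLSA1 i); exact: Tcnt_mono.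
have ttT : (t <= Tcnt a i T)%N by exact: Tcnt_mono.
have ttR : t%:R <= (Tcnt a i T)%:R :> R by rewrite ler_nat.
have t1R : 1 <= t%:R :> R by rewrite ler1n.
have htl : 20 * t%:R < lam by lra.
have l0 : 0 <= lam by lra.
have [hs1 hs2] : (Num.truncn lam)%:R <= lam /\ lam < (Num.truncn lam).+1%:R.
  by have /andP[] := Num.Theory.truncn_itv l0.
have hs20 : (20 <= Num.truncn lam)%N by rewrite truncn_ge_nat //; lra.
have hs20R : 20 <= (Num.truncn lam)%:R :> R.
  by have := hs20; rewrite -(ler_nat R).
have htle : t%:R <= lam by lra.
have := hM t t1 htle; rewrite /= => -[r0 he].
set s := Num.truncn lam in hs1 hs2 hs20 hs20R.
have hsle : (1 <= s)%N by apply: leq_trans hs20.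
have := hM s hsle hs1; rewrite /= => -[rs0 _].
have e0 : 0 <= emp_gap (X i) theta t by rewrite normr_ge0.
have hs2' : lam < s%:R + 1 by rewrite natr1.
have := @key R _ _ _ _ _ _ _ _ _ 0 ha hD hlam hlnD t1R htl hs20R hs1 hs2' erefl r0 he e0 rs0.
rewrite /fkappa.
lra.
Qed.
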